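(* Let $D$ be an integral domain of characteristic zero. Suppose that every $D$-algebra endomorphism $f$ of $D[x,y]$ with $\operatorname{Jac}(f(x),f(y))\in D^*$ is an automorphism of $D[x,y]$. Then for all $A,B,w\in D[x,y]$ with $\operatorname{Jac}(A,B)\in D^*$ and $\operatorname{Jac}(A,w)=0$, one has $w\in D[A]$.
   Context: $\operatorname{Jac}(u,v):=u_xv_y-u_yv_x$ for $u,v\in D[x,y]$. $D^*$ is the group of units of $D$. $D[A]$ is the $D$-subalgebra of $D[x,y]$ generated by $A$. *)

(* Defs.v *)
(* D[x,y] is modelled as {poly {poly D}}:
   the inner variable is x ('X%:P), the outer variable is y ('X). *)
From HB Require Import structures.
From mathcomp Require Import all_boot all_order all_algebra.
Set Implicit Arguments. Unset Strict Implicit. Unset Printing Implicit Defensive.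
Import Order.TTheory GRing.Theory Num.Theory.
Local Open Scope ring_scope.

Notation bipoly D := {poly {poly D}}.

Definition varx (D : idomainType) : bipoly D := 'X%:P.
Definition vary (D : idomainType) : bipoly D := 'X.

Definition cst (D : idomainType) (a : D) : bipoly D := a%:P%:P.

Definition dx (D : idomainType) (p : bipoly D) : bipoly D := map_poly deriv p.
Definition dy (D : idomainType) (p : bipoly D) : bipoly D := deriv p.

Definition Jac (D : idomainType) (u v : bipoly D) : bipoly D :=
  dx u * dy v - dy u * dx v.

Definition is_Dunit (D : idomainType) (p : bipoly D) : Prop :=
  exists c : D, c \is a GRing.unit /\ p = cst c.

Definition is_Dalg_endo (D : idomainType) (f : bipoly D -> bipoly D) : Prop :=
  [/\ forall p q, f (p + q) = f p + f q,
      forall p q, f (p * q) = f p * f q,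
      f 1 = 1
    & forall a : D, f (cst a) = cst a].

Definition peval (D : idomainType) (g : {poly D}) (A : bipoly D) : bipoly D :=
  (map_poly (@cst D) g).[A].

Definition in_Dalg_gen (D : idomainType) (A w : bipoly D) : Prop :=
  exists g : {poly D}, w = peval g A.

(* Main.v *)
Require Import Defs.
From HB Require Import structures.
From mathcomp Require Import all_boot all_order all_algebra.
From mathcomp Require Import ring.
Import GRing.Theory.
Local Open Scope ring_scope.

Lemma dxM (D : idomainType) (p q : bipoly D) : dx (p * q) = dx p * q + p * dx q.
Proof.
apply/polyP=> i; rewrite /dx coefD !coef_map /= !coefM -big_split /= raddf_sum.
by apply: eq_bigr => j _; rewrite /= derivM !coef_map.
Qed.

Lemma dxD (D : idomainType) (p q : bipoly D) : dx (p + q) = dx p + dx q.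
Proof. by rewrite /dx raddfD. Qed.

Lemma dyM (D : idomainType) (p q : bipoly D) : dy (p * q) = dy p * q + p * dy q.
Proof. exact: derivM. Qed.

Lemma dyD (D : idomainType) (p q : bipoly D) : dy (p + q) = dy p + dy q.
Proof. exact: derivD. Qed.

Lemma dx_cst (D : idomainType) (a : D) : dx (cst a) = 0.
Proof. by rewrite /dx /cst map_polyC /= derivC. Qed.

Lemma dy_cst (D : idomainType) (a : D) : dy (cst a) = 0.
Proof. by rewrite /dy /cst derivC. Qed.

Lemma dx0 (D : idomainType) : dx (0 : bipoly D) = 0.
Proof. by rewrite /dx map_poly0. Qed.

Lemma dy0 (D : idomainType) : dy (0 : bipoly D) = 0.
Proof. by rewrite /dy deriv0. Qed.

Lemma dxx (D : idomainType) : dx (varx D) = 1.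
Proof. by rewrite /dx /varx map_polyC /= derivX. Qed.

Lemma dyx (D : idomainType) : dy (varx D) = 0.
Proof. by rewrite /dy /varx derivC. Qed.

Lemma dxy (D : idomainType) : dx (vary D) = 0.
Proof.
apply/polyP=> i; rewrite /dx /vary coef_map /= coefX coef0.
by case: (i == 1)%N; rewrite /= ?derivC ?deriv0.
Qed.

Lemma dyy (D : idomainType) : dy (vary D) = 1.
Proof. by rewrite /dy /vary derivX. Qed.

Lemma chain (D : idomainType) (d : bipoly D -> bipoly D)
  (F : {rmorphism bipoly D -> bipoly D}) :
  (forall p q, d (p + q) = d p + d q) ->
  (forall p q, d (p * q) = d p * q + p * d q) ->
  (forall a, d (cst a) = 0) ->
  (forall a, F (cst a) = cst a) ->
  forall p, d (F p) = F (dx p) * d (F (varx D)) + F (dy p) * d (F (vary D)).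
Proof.
move=> dD dM dC FC.
pose P p := d (F p) = F (dx p) * d (F (varx D)) + F (dy p) * d (F (vary D)).
have d0 : d 0 = 0.
  by apply: (addrI (d 0)); rewrite -dD !addr0.
have P0 : P 0 by rewrite /P rmorph0 d0 dx0 dy0 rmorph0 !mul0r addr0.
have PD p q : P p -> P q -> P (p + q).
  rewrite /P => Hp Hq; rewrite rmorphD dD Hp Hq dxD dyD !rmorphD; ring.
have PM p q : P p -> P q -> P (p * q).
  rewrite /P => Hp Hq; rewrite rmorphM dM Hp Hq dxM dyM !rmorphD !rmorphM; ring.
have PC a : P (cst a) by rewrite /P FC dC dx_cst dy_cst rmorph0 !mul0r addr0.
have Px : P (varx D) by rewrite /P dxx dyx rmorph1 rmorph0 mul0r addr0 mul1r.
have Py : P (vary D) by rewrite /P dxy dyy rmorph1 rmorph0 mul0r add0r mul1r.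
have Pc (c : {poly D}) : P c%:P.
  elim/poly_ind: c => [|r e IH]; first by rewrite polyC0.
  rewrite rmorphD rmorphM /=; apply: PD; last exact: PC.
  by apply: PM.
move=> p; elim/poly_ind: p => [|q c IH]; first exact: P0.
by apply: PD; [apply: PM|apply: Pc].
Qed.

Theorem theorem3p5 (D : idomainType)
  (char0 : [pchar D] =i pred0)
  (JC : forall f : bipoly D -> bipoly D,
      is_Dalg_endo f -> is_Dunit (Jac (f (varx D)) (f (vary D))) -> bijective f) :
  forall A B w : bipoly D,
    is_Dunit (Jac A B) -> Jac A w = 0 -> in_Dalg_gen A w.
Proof.
move=> A B w [c [cU JAB]] JAw.
pose g : {rmorphism D -> bipoly D} := (polyC \o polyC : D -> bipoly D).
have cfu : commr_rmorph g A by move=> a; exact: mulrC.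
pose phi : {rmorphism {poly D} -> bipoly D} := horner_morph cfu.
have cfu2 : commr_rmorph phi B by move=> a; exact: mulrC.
pose F : {rmorphism bipoly D -> bipoly D} := horner_morph cfu2.
have FC a : F (cst a) = cst a.
  exact: etrans (horner_morphC cfu2 (a%:P)) (horner_morphC cfu a).
have Fx : F (varx D) = A.
  exact: etrans (horner_morphC cfu2 'X) (horner_morphX cfu).
have Fy : F (vary D) = B by exact: (horner_morphX cfu2).
have endo : is_Dalg_endo F.
  by split; [exact: rmorphD|exact: rmorphM|exact: rmorph1|exact: FC].
have [G FG GF] := JC F endo (ex_intro _ c (conj cU (etrans (congr2 _ Fx Fy) JAB))).
pose v := G w.
have wv : w = F v by rewrite /v GF.
have chx := @chain D (@dx D) F (@dxD D) (@dxM D) (@dx_cst D) FC v.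
have chy := @chain D (@dy D) F (@dyD D) (@dyM D) (@dy_cst D) FC v.
rewrite Fx Fy -wv in chx chy.
have H : F (dy v) * cst c = 0.
  rewrite -JAB -JAw /Jac chx chy; ring.
have cn0 : cst c != 0.
  rewrite /cst !polyC_eq0; apply/eqP => c0; move: cU; by rewrite c0 unitr0.
move/eqP: H; rewrite mulf_eq0 (negbTE cn0) orbF => /eqP H.
have dv0 : dy v = 0 by apply: (can_inj FG); rewrite H rmorph0.
have vC : v = (v`_0)%:P.
  apply/polyP => i; rewrite coefC; case: i => [|i] //=.
  have := congr1 (fun p : bipoly D => p`_i) dv0; rewrite /dy coef_deriv coef0 /=.
  move/eqP; rewrite -mulr_natr mulf_eq0 => /orP [/eqP //|].
  rewrite -polyC_natr polyC_eq0 ((pcharf0P D).1 char0) //.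
exists v`_0; rewrite wv {1}vC.
transitivity (phi v`_0); first exact: (horner_morphC cfu2 _).
rewrite /phi /= /peval /horner_morph; by congr horner.
Qed.
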